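(* The logic $\mathsf{LCA}$ is sound and complete for the class of all models: for every $\varphi\in\mathcal{L}$, $\varphi$ is a theorem of $\mathsf{LCA}$ iff $\varphi$ is valid (true in every model $(S,U)$). Here $\mathsf{LCA}$ is the extension of classical propositional logic (over $\mathcal{L}$) by the following axioms and rules, for all $i\in\mathit{Agt}$, $\alpha\in\mathcal{L}_0$, $\varphi,\psi\in\mathcal{L}$, and $\circledcirc\in\{\mathcal{A}_i,\mathcal{R}_i,\mathcal{A}^{\mathsf{real}}_i,\mathcal{R}^{\mathsf{real}}_i\}$: (A1) $(\Box_i\varphi\wedge\Box_i(\varphi\to\psi))\to\Box_i\psi$; (A2) $(\circledcirc\varphi\wedge\circledcirc(\neg\varphi\wedge\psi))\to\circledcirc\psi$; (A3) $\triangle_i\alpha\to\Box_i\alpha$; (A4) $\triangle_i(\alpha\to\mathsf{rew}_i)\to\mathcal{A}_i\alpha$; (A5) $\triangle_i(\alpha\to\mathsf{pun}_i)\to\mathcal{R}_i\alpha$; (A6) $\mathcal{A}_i\varphi\to\mathcal{A}^{\mathsf{real}}_i\varphi$; (A7) $\mathcal{R}_i\varphi\to\mathcal{R}^{\mathsf{real}}_i\varphi$; (A8) $\Box_i\varphi\to\mathcal{A}^{\mathsf{real}}_i\neg\varphi$; (A9) $\Box_i\varphi\to\mathcal{R}^{\mathsf{real}}_i\neg\varphi$; (A10) $\mathcal{A}^{\mathsf{real}}_i\varphi\to\Box_i(\varphi\to\mathsf{rew}_i)$; (A11) $\mathcal{R}^{\mathsf{real}}_i\varphi\to\Box_i(\varphi\to\mathsf{pun}_i)$;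 (R1) from $\varphi$ infer $\Box_i\varphi$; (R2) from $\varphi$ infer $\circledcirc\neg\varphi$; (R3) from $\varphi\leftrightarrow\psi$ infer $\circledcirc\varphi\leftrightarrow\circledcirc\psi$.
   Context: Let $\mathit{Agt}=\{1,\dots,n\}$ be a finite set of agents and $\mathit{Atm}$ a countably infinite set of atoms containing, for each $i\in\mathit{Agt}$, special atoms $\mathsf{rew}_i$ and $\mathsf{pun}_i$. The language $\mathcal{L}_0$ is given by $\alpha::=p\mid\neg\alpha\mid\alpha\wedge\alpha\mid \triangle_i\alpha$ ($p\in\mathit{Atm}$, $i\in\mathit{Agt}$); $\to,\vee,\leftrightarrow,\top,\bot$ are the usual abbreviations. A state is a tuple $S=((B_i)_{i\in\mathit{Agt}},V)$ with $B_i\subseteq\mathcal{L}_0$ and $V\subseteq\mathit{Atm}$; $\mathbf{S}$ is the set of all states. Truth of $\mathcal{L}_0$-formulas: $S\models p$ iff $p\in V$; Boolean clauses as usual; $S\models\triangle_i\alpha$ iff $\alpha\in B_i$. Define $\mathit{Des}_i(S)=\{\alpha\in\mathcal{L}_0:(\alpha\to\mathsf{rew}_i)\in B_i\}$ and $\mathit{Und}_i(S)=\{\alpha\in\mathcal{L}_0:(\alpha\to\mathsf{pun}_i)\in B_i\}$. Relations on $\mathbf{S}$: $S\,\mathcal{E}_i\,S'$ iff $S'\models\alpha$ for all $\alpha\in B_i$; $S\,\mathcal{A}_i\,S'$ iff $S'\models\alpha$ for some $\alpha\in\mathit{Des}_i(S)$; $S\,\mathcal{R}_i\,S'$ iff $S'\models\alpha$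 for some $\alpha\in\mathit{Und}_i(S)$. A model is a pair $(S,U)$ with $S\in U\subseteq\mathbf{S}$. The language $\mathcal{L}$ is $\varphi::=\alpha\mid\neg\varphi\mid\varphi\wedge\varphi\mid\Box_i\varphi\mid\mathcal{A}_i\varphi\mid\mathcal{R}_i\varphi\mid\mathcal{A}^{\mathsf{real}}_i\varphi\mid\mathcal{R}^{\mathsf{real}}_i\varphi$ with $\alpha\in\mathcal{L}_0$. Semantics: $(S,U)\models\alpha$ iff $S\models\alpha$; Boolean clauses as usual; $(S,U)\models\Box_i\varphi$ iff for all $S'\in U$ with $S\mathcal{E}_iS'$, $(S',U)\models\varphi$; $(S,U)\models\mathcal{A}_i\varphi$ iff for all $S'\in U$ with $(S',U)\models\varphi$, $S\mathcal{A}_iS'$; $(S,U)\models\mathcal{R}_i\varphi$ iff for all $S'\in U$ with $(S',U)\models\varphi$, $S\mathcal{R}_iS'$; $(S,U)\models\mathcal{A}^{\mathsf{real}}_i\varphi$ iff for all $S'\in U$ with $(S',U)\models\varphi$ and $S\mathcal{E}_iS'$, $S\mathcal{A}_iS'$; $(S,U)\models\mathcal{R}^{\mathsf{real}}_i\varphi$ iff for all $S'\in U$ with $(S',U)\models\varphi$ and $S\mathcal{E}_iS'$, $S\mathcal{R}_iS'$. *)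

(* Defs.v *)
From mathcomp Require Import all_boot.
Set Implicit Arguments.
Unset Strict Implicit.
Unset Printing Implicit Defensive.

Section LCA.
Variable n : nat.
Definition agent := 'I_n.

Inductive atom : Type :=
| AP of nat
| ARew of agent
| APun of agent.

Inductive form0 : Type :=
| At0 of atom
| Neg0 of form0
| And0 of form0 & form0
| Tri0 of agent & form0.

Definition Imp0 (a b : form0) : form0 := Neg0 (And0 a (Neg0 b)).

Inductive mop : Type := OA | OR | OAreal | ORreal.

(* L.  Its alpha-case is unfolded: L0 formulas are generated inside L by
   atoms, negation, conjunction and triangle_i (whose argument is in L0). *)
Inductive form : Type :=
| At of atom
| Neg of form
| And of form & form
| Tri of agent & form0
| Box of agent & form
| Mod of mop & agent & form.

Fixpoint emb (a : form0) : form :=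
  match a with
  | At0 p => At p
  | Neg0 b => Neg (emb b)
  | And0 b c => And (emb b) (emb c)
  | Tri0 i b => Tri i b
  end.

Definition Imp (a b : form) : form := Neg (And a (Neg b)).
Definition Iff (a b : form) : form := And (Imp a b) (Imp b a).

Record state : Type := State {
  Bel : agent -> form0 -> Prop;
  Val : atom -> Prop
}.

Fixpoint sat0 (S : state) (a : form0) : Prop :=
  match a with
  | At0 p => Val S p
  | Neg0 b => ~ sat0 S b
  | And0 b c => sat0 S b /\ sat0 S c
  | Tri0 i b => Bel S i b
  end.

Definition Des (i : agent) (S : state) (a : form0) : Prop :=
  Bel S i (Imp0 a (At0 (ARew i))).
Definition Und (i : agent) (S : state) (a : form0) : Prop :=
  Bel S i (Imp0 a (At0 (APun i))).

Definition relE (i : agent) (S S' : state) : Prop :=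
  forall a, Bel S i a -> sat0 S' a.
Definition relA (i : agent) (S S' : state) : Prop :=
  exists a, Des i S a /\ sat0 S' a.
Definition relR (i : agent) (S S' : state) : Prop :=
  exists a, Und i S a /\ sat0 S' a.

Fixpoint sat (U : state -> Prop) (S : state) (f : form) : Prop :=
  match f with
  | At p => Val S p
  | Neg g => ~ sat U S g
  | And g h => sat U S g /\ sat U S h
  | Tri i b => Bel S i b
  | Box i g => forall S', U S' -> relE i S S' -> sat U S' g
  | Mod OA i g => forall S', U S' -> sat U S' g -> relA i S S'
  | Mod OR i g => forall S', U S' -> sat U S' g -> relR i S S'
  | Mod OAreal i g =>
      forall S', U S' -> sat U S' g -> relE i S S' -> relA i S S'
  | Mod ORreal i g =>
      forall S', U S' -> sat U S' g -> relE i S S' -> relR i S S'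
  end.

Definition valid (f : form) : Prop :=
  forall (U : state -> Prop) (S : state), U S -> sat U S f.

(* Classical propositional tautologies over L: formulas whose head is not
   Neg/And are treated as propositional atoms. *)
Fixpoint peval (v : form -> bool) (f : form) : bool :=
  match f with
  | Neg g => ~~ peval v g
  | And g h => peval v g && peval v h
  | _ => v f
  end.

Definition tautology (f : form) : Prop := forall v, peval v f = true.

Definition rew (i : agent) : form := At (ARew i).
Definition pun (i : agent) : form := At (APun i).

Inductive LCA : form -> Prop :=
| LCA_taut f : tautology f -> LCA f
| LCA_MP f g : LCA f -> LCA (Imp f g) -> LCA g
| LCA_A1 i f g : LCA (Imp (And (Box i f) (Box i (Imp f g))) (Box i g))
| LCA_A2 o i f g :
    LCA (Imp (And (Mod o i f) (Mod o i (And (Neg f) g))) (Mod o i g))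
| LCA_A3 i a : LCA (Imp (Tri i a) (Box i (emb a)))
| LCA_A4 i a : LCA (Imp (Tri i (Imp0 a (At0 (ARew i)))) (Mod OA i (emb a)))
| LCA_A5 i a : LCA (Imp (Tri i (Imp0 a (At0 (APun i)))) (Mod OR i (emb a)))
| LCA_A6 i f : LCA (Imp (Mod OA i f) (Mod OAreal i f))
| LCA_A7 i f : LCA (Imp (Mod OR i f) (Mod ORreal i f))
| LCA_A8 i f : LCA (Imp (Box i f) (Mod OAreal i (Neg f)))
| LCA_A9 i f : LCA (Imp (Box i f) (Mod ORreal i (Neg f)))
| LCA_A10 i f : LCA (Imp (Mod OAreal i f) (Box i (Imp f (rew i))))
| LCA_A11 i f : LCA (Imp (Mod ORreal i f) (Box i (Imp f (pun i))))
| LCA_R1 i f : LCA f -> LCA (Box i f)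
| LCA_R2 o i f : LCA f -> LCA (Mod o i (Neg f))
| LCA_R3 o i f g : LCA (Iff f g) -> LCA (Iff (Mod o i f) (Mod o i g)).

End LCA.

(* Main.v *)
Require Import Defs.
From mathcomp Require Import all_boot.
From Stdlib Require Import Classical ClassicalEpsilon.
From Stdlib Require List.
Set Implicit Arguments.
Unset Strict Implicit.


Ltac bt := simpl; repeat match goal with |- context [?x] =>
  lazymatch type of x with bool =>
   lazymatch x with true => fail | false => fail | negb _ => fail | andb _ _ => fail
   | orb _ _ => fail | implb _ _ => fail | _ => destruct x end end end; done.

Section Prop1.
Variable n : nat.
Implicit Types (f g h : form n) (L : seq (form n)).

Definition top : form n := Neg (And (At (AP n 0)) (Neg (At (AP n 0)))).
Definition bot : form n := Neg top.
Definition Or f g : form n := Neg (And (Neg f) (Neg g)).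
Fixpoint bigAnd L : form n := match L with [::] => top | f :: L' => And f (bigAnd L') end.
Fixpoint bigOr L : form n := match L with [::] => bot | f :: L' => Or f (bigOr L') end.

Lemma pe_top v : peval v top = true.
Proof. by simpl; case: (v _). Qed.
Lemma pe_bigAnd v L : peval v (bigAnd L) = all (peval v) L.
Proof. elim: L => [|f L IH] /=; [exact: pe_top| by rewrite IH]. Qed.
Lemma pe_bigOr v L : peval v (bigOr L) = has (peval v) L.
Proof. elim: L => [|f L IH] /=; first bt.
rewrite IH; bt. Qed.
Lemma pe_bigAndNeg v L : peval v (bigAnd (map (@Neg n) L)) = ~~ has (peval v) L.
Proof. elim: L => [|f L IH] /=; first bt.
rewrite IH; bt. Qed.
Lemma all_In (p : form n -> bool) L x : List.In x L -> all p L -> p x.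
Proof. elim: L => [|y L IH] //= [->|H] /andP[H1 H2]; auto. Qed.
Lemma has_In (p : form n -> bool) L x : List.In x L -> p x -> has p L.
Proof. elim: L => [|y L IH] //= [->|H] Hp; first by rewrite Hp.
by rewrite IH ?orbT. Qed.

Lemma prop_cons L g : (forall f, List.In f L -> LCA f) ->
  (forall v, all (peval v) L -> peval v g) -> LCA g.
Proof.
elim: L g => [|f L IH] g HL Hv.
- apply: LCA_taut => v; exact: Hv.
- apply: (@LCA_MP _ f); first by apply: HL; left.
  apply: IH; first by move=> h Hh; apply: HL; right.
  move=> v Hall /=. case Hf: (peval v f) => //=.
  by rewrite Hv //= Hf.
Qed.

Lemma pc1 f g : LCA f -> (forall v, peval v f -> peval v g) -> LCA g.
Proof. move=> H1 H; apply: (@prop_cons [:: f]) => [h [<-|[]]|v /=]//.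
by rewrite andbT; apply: H. Qed.
Lemma pc2 f1 f2 g : LCA f1 -> LCA f2 -> (forall v, peval v f1 -> peval v f2 -> peval v g) -> LCA g.
Proof. move=> H1 H2 H; apply: (@prop_cons [:: f1; f2]) => [h [<-|[<-|[]]]|v /=]//.
by rewrite andbT => /andP[]; apply: H. Qed.
Lemma pc3 f1 f2 f3 g : LCA f1 -> LCA f2 -> LCA f3 ->
  (forall v, peval v f1 -> peval v f2 -> peval v f3 -> peval v g) -> LCA g.
Proof. move=> H1 H2 H3 H; apply: (@prop_cons [:: f1; f2; f3]) => [h [<-|[<-|[<-|[]]]]|v /=]//.
by rewrite andbT => /and3P[]; apply: H. Qed.
Lemma taut g : (forall v, peval v g) -> LCA g.
Proof. by move=> H; apply: LCA_taut => v; apply: H. Qed.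

Lemma box_mono i f g : LCA (Imp f g) -> LCA (Imp (Box i f) (Box i g)).
Proof. move=> H. have H1 := LCA_R1 i H. have H2 := LCA_A1 i f g.
refine (pc2 H1 H2 _) => v /=. bt. Qed.

Lemma mod_ext o i f g : LCA (Iff f g) -> LCA (Imp (Mod o i f) (Mod o i g)).
Proof. move=> /(LCA_R3 o i) H; refine (pc1 H _) => v /=.
bt. Qed.

Lemma mod_bot o i : LCA (Mod o i bot).
Proof. apply: LCA_R2; apply: taut => v; exact: pe_top. Qed.

Lemma mod_anti o i f g : LCA (Imp g f) -> LCA (Imp (Mod o i f) (Mod o i g)).
Proof. move=> H.
have H1 := LCA_A2 o i f (And f g).
have H2 : LCA (Mod o i (And (Neg f) (And f g))).
  have E : LCA (Imp (Mod o i bot) (Mod o i (And (Neg f) (And f g)))).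
    apply: mod_ext; apply: taut => v /=; rewrite ?pe_top /=.
    bt.
  refine (pc2 (mod_bot o i) E _) => v /=. bt.
have H3 : LCA (Imp (Mod o i (And f g)) (Mod o i g)).
  apply: mod_ext; refine (pc1 H _) => v /=.
  bt.
refine (pc3 H1 H2 H3 _) => v /=.
bt.
Qed.

Lemma mod_union o i f g : LCA (Imp (And (Mod o i f) (Mod o i g)) (Mod o i (Or f g))).
Proof.
have H1 := LCA_A2 o i f (Or f g).
have H2 : LCA (Imp (Mod o i g) (Mod o i (And (Neg f) (Or f g)))).
  apply: mod_anti; apply: taut => v /=. bt.
refine (pc2 H1 H2 _) => v /=.
bt.
Qed.

Lemma mod_bigOr o i L : LCA (Imp (bigAnd (map (Mod o i) L)) (Mod o i (bigOr L))).
Proof.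
elim: L => [|f L IH] /=.
- refine (pc1 (mod_bot o i) _) => v /= ->. by rewrite andbF.
- have H := mod_union o i f (bigOr L).
  refine (pc2 IH H _) => v /=.
  bt.
Qed.

Lemma box_bigAnd i L : LCA (Imp (bigAnd (map (Box i) L)) (Box i (bigAnd L))).
Proof.
elim: L => [|f L IH] /=.
- have H : LCA (Box i top) by apply: LCA_R1; apply: taut => v; exact: pe_top.
  refine (pc1 H _) => v /= ->. by rewrite andbF.
- have H1 : LCA (Imp (Box i (bigAnd L)) (Box i (Imp f (And f (bigAnd L))))).
    apply: box_mono; apply: taut => v /=. bt.
  have H2 := LCA_A1 i f (And f (bigAnd L)).
  refine (pc3 IH H1 H2 _) => v /=.
  bt.
Qed.

End Prop1.


Section Sound.
Variable n : nat.
Implicit Types (U : state n -> Prop) (S : state n) (f g : form n).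

Definition Qo (o : mop) (i : agent n) (S S' : state n) : Prop :=
  match o with OA => relA i S S' | OR => relR i S S'
  | OAreal => relE i S S' -> relA i S S' | ORreal => relE i S S' -> relR i S S' end.
Lemma sat_mod U S o i g : sat U S (Mod o i g) <-> forall S', U S' -> sat U S' g -> Qo o i S S'.
Proof. by case: o. Qed.
Lemma sat_emb U S (a : form0 n) : sat U S (emb a) <-> sat0 S a.
Proof. elim: a => [x|b IH|b IHb c IHc|j b _] /=; tauto. Qed.

Definition vsat U S (g : form n) : bool :=
  if excluded_middle_informative (sat U S g) then true else false.
Lemma bneg (b : bool) P : (b = true <-> P) -> (~~ b = true <-> ~ P).
Proof. move=> H; split => [Hb HP | HnP].
- by move/H: HP => HP'; rewrite HP' in Hb.
- by case: b H => // H; case: HnP; apply/H. Qed.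
Lemma band (b c : bool) P Q : (b = true <-> P) -> (c = true <-> Q) -> (b && c = true <-> P /\ Q).
Proof. move=> H1 H2; split => [/andP [/H1 ? /H2 ?] // | [/H1 -> /H2 ->] //]. Qed.
Lemma peval_sat U S f : peval (vsat U S) f = true <-> sat U S f.
Proof.
elim: f => [x|g IH|g IHg h IHh|j b|j g IH|o j g IH].
1,4,5,6: by rewrite /= /vsat; case: excluded_middle_informative => /= H; split.
- exact: bneg.
- exact: band.
Qed.

Lemma sat_imp U S f g : sat U S (Imp f g) <-> (sat U S f -> sat U S g).
Proof. simpl; split; [move=> H Hf; apply: NNPP => Hg; tauto | tauto]. Qed.

Theorem soundness (f : form n) : LCA f -> valid f.
Proof.
elim=> {f} [f Ht|f g _ IH1 _ IH2|i f g|o i f g|i a|i a|i a|i f|i f|i f|i f|i f|i f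
  |i f _ IH|o i f _ IH|o i f g _ IH] U S HS.
- by apply/(peval_sat U S); apply: Ht.
- by move: (IH2 U S HS) => /sat_imp; apply; apply: IH1.
- apply/sat_imp => [[H1 H2]] S' HU HE.
  by move: (H2 S' HU HE) => /sat_imp; apply; apply: H1.
- apply/sat_imp => H.
  have /sat_mod H1 : sat U S (Mod o i f) := proj1 H.
  have /sat_mod H2 : sat U S (Mod o i (And (Neg f) g)) := proj2 H.
  apply/sat_mod => S' HU Hg.
  case: (classic (sat U S' f)) => Hf; [exact: H1 | apply: H2 => //=; tauto].
- apply/sat_imp => /= H S' HU HE; apply/sat_emb; exact: HE.
- apply/sat_imp => /= H S' HU /sat_emb Ha; by exists a.
- apply/sat_imp => /= H S' HU /sat_emb Ha; by exists a.
- by apply/sat_imp => /= H S' HU Hf _; apply: H.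
- by apply/sat_imp => /= H S' HU Hf _; apply: H.
- by apply/sat_imp => /= H S' HU Hf HE; case: (Hf (H S' HU HE)).
- by apply/sat_imp => /= H S' HU Hf HE; case: (Hf (H S' HU HE)).
- apply/sat_imp => /= H S' HU HE [Hf Hr]; case: (H S' HU Hf HE) => a [Ha Hs].
  by move: (HE _ Ha) => /=; tauto.
- apply/sat_imp => /= H S' HU HE [Hf Hr]; case: (H S' HU Hf HE) => a [Ha Hs].
  by move: (HE _ Ha) => /=; tauto.
- move=> S' HU _; exact: IH.
- apply/sat_mod => S' HU /= Hn; by case: Hn; apply: IH.
- have E : forall S', U S' -> (sat U S' f <-> sat U S' g).
    move=> S' HU; move: (IH U S' HU) => /= [H1 H2].
    split => [Hf|Hg]; apply: NNPP => Hn; tauto.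
  have Hm : forall f' g', (forall S', U S' -> (sat U S' f' <-> sat U S' g')) ->
      sat U S (Mod o i f') -> sat U S (Mod o i g').
    move=> f' g' E' /sat_mod Hf; apply/sat_mod => S' HU Hg; apply: Hf => //; by apply/E'.
  have Hfg := Hm f g E. have Hgf := Hm g f (fun S' HU => iff_sym (E S' HU)).
  change (sat U S (Imp (Mod o i f) (Mod o i g)) /\ sat U S (Imp (Mod o i g) (Mod o i f))).
  by split; apply/sat_imp.
Qed.
End Sound.


Inductive kind := KA | KR.

Section Gen.
Variable n : nat.
Implicit Types (f g h : form n) (L : seq (form n)).

Definition lowa k (x : atom n) : Prop := match x with AP j => j < k | _ => True end.
Fixpoint low0 k (a : form0 n) : Prop :=
  match a with At0 x => lowa k x | Neg0 b => low0 k b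
  | And0 b c => low0 k b /\ low0 k c | Tri0 _ b => low0 k b end.
Definition base (k : kind) : mop := if k is KA then OA else OR.
Definition real (k : kind) : mop := if k is KA then OAreal else ORreal.
Definition tg (k : kind) (i : agent n) : atom n := if k is KA then ARew i else APun i.
Definition tgo (o : mop) (i : agent n) : atom n :=
  match o with OA | OAreal => ARew i | _ => APun i end.
Lemma tgo_base k i : tgo (base k) i = tg k i. Proof. by case: k. Qed.
Lemma tgo_real k i : tgo (real k) i = tg k i. Proof. by case: k. Qed.

Lemma axA4 k i a : LCA (Imp (Tri i (Imp0 a (At0 (tg k i)))) (Mod (base k) i (emb a))).
Proof. case: k; [exact: LCA_A4 | exact: LCA_A5]. Qed.
Lemma axA6 k i f : LCA (Imp (Mod (base k) i f) (Mod (real k) i f)).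
Proof. case: k; [exact: LCA_A6 | exact: LCA_A7]. Qed.
Lemma axA8 k i f : LCA (Imp (Box i f) (Mod (real k) i (Neg f))).
Proof. case: k; [exact: LCA_A8 | exact: LCA_A9]. Qed.
Lemma axA10 k i f : LCA (Imp (Mod (real k) i f) (Box i (Imp f (At (tg k i))))).
Proof. case: k; [exact: LCA_A10 | exact: LCA_A11]. Qed.

Definition relK k i (S S' : state n) := if k is KA then relA i S S' else relR i S S'.
Lemma relK_def k i S S' : relK k i S S' <-> exists a, Bel S i (Imp0 a (At0 (tg k i))) /\ sat0 S' a.
Proof. by case: k. Qed.
Lemma sat_base U S k i g : sat U S (Mod (base k) i g) <-> forall S', U S' -> sat U S' g -> relK k i S S'.
Proof. by case: k. Qed.
Lemma sat_real U S k i g : sat U S (Mod (real k) i g) <->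
  forall S', U S' -> sat U S' g -> relE i S S' -> relK k i S S'.
Proof. by case: k. Qed.

Fixpoint conjb L (bs : seq bool) : form n :=
  match L, bs with f :: L', b :: bs' => And (if b then f else Neg f) (conjb L' bs')
  | _, _ => top n end.

Definition consistent f := ~ LCA (Neg f).

Lemma conj_lit L bs g : size bs = size L -> List.In g L ->
  (forall v, peval v (conjb L bs) -> peval v g) \/ (forall v, peval v (conjb L bs) -> ~~ peval v g).
Proof.
elim: L bs => [|a L IH] [|b bs] //= [Hs] [<-|Hin].
- case: b; [left|right] => v /andP[] //.
- case: (IH bs Hs Hin) => H; [left|right] => v /andP[_]; exact: H.
Qed.

Lemma lind_gen L f : consistent f -> exists bs, size bs = size L /\ consistent (And (conjb L bs) f).
Proof.
elim: L f => [|a L IH] f Hf.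
- exists [::]; split => // H; apply: Hf; refine (pc1 H _) => v; bt.
- case: (classic (LCA (Neg (And f a)))) => Ha.
  + have Hna : consistent (And f (Neg a)).
      move=> H; apply: Hf; refine (pc2 Ha H _) => v; bt.
    case: (IH _ Hna) => bs [Hs Hc]; exists (false :: bs); split; first by rewrite /= Hs.
    move=> H; apply: Hc; refine (pc1 H _) => v; bt.
  + case: (IH _ Ha) => bs [Hs Hc]; exists (true :: bs); split; first by rewrite /= Hs.
    move=> H; apply: Hc; refine (pc1 H _) => v; bt.
Qed.

Lemma fin_sel L (F : form n -> form n -> Prop) :
  (forall h f f', F h f -> F h f' -> f = f') ->
  exists L', forall f, List.In f L' <-> exists h, List.In h L /\ F h f.
Proof.
move=> Hfun; elim: L => [|h L IH].
- exists [::] => f; split => //=; by case=> h [].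
- case: IH => L' HL'.
  case: (classic (exists f, F h f)) => [[f0 Hf0]|Hno].
  + exists (f0 :: L') => f; split => /=.
    * case=> [<-|/HL' [h' [H1 H2]]]; [by exists h; split; [left|] | by exists h'; split; [right|]].
    * case=> h' [[<-|H1] H2]; [left; exact: Hfun Hf0 H2 | right; apply/HL'; by exists h'].
  + exists L' => f; split.
    * move=> /HL' [h' [H1 H2]]; by exists h'; split; [right|].
    * case=> h' [[E|H1] H2]; [subst h'; case: Hno; by exists f | apply/HL'; by exists h'].
Qed.

Lemma in_map_In (A B : Type) (F : A -> B) (L : seq A) y :
  List.In y (map F L) -> exists x, y = F x /\ List.In x L.
Proof. elim: L => [|x L IH] //= [<-|/IH [x' [-> H]]]; [by exists x; split; [|left] | by exists x'; split; [|right]]. Qed.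

Lemma In_cat (A : Type) (L1 L2 : seq A) x : List.In x (L1 ++ L2) <-> List.In x L1 \/ List.In x L2.
Proof. elim: L1 => [|y L1 IH] /=; first by tauto. rewrite IH; tauto. Qed.

End Gen.


Section Model.
Variable n : nat.
Implicit Types (f g h : form n) (L : seq (form n)).
Variable cl : seq (form n).
Variable k0 : nat.
Local Notation In := List.In.
Hypothesis Hneg : forall g, In (Neg g) cl -> In g cl.
Hypothesis Hand : forall a b, In (And a b) cl -> In a cl /\ In b cl.
Hypothesis Hbox : forall i g, In (Box i g) cl -> In g cl.
Hypothesis Hmod : forall o i g, In (Mod o i g) cl -> In g cl /\ In (Box i (Imp g (At (tgo o i)))) cl.
Hypothesis Htri : forall i a, In (Tri i a) cl -> In (emb a) cl /\ low0 k0 a.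
Hypothesis HtriK : forall k i a, In (Tri i (Imp0 a (At0 (tg k i)))) cl -> In (Mod (base k) i (emb a)) cl.
Hypothesis Hat : forall x, In (At x) cl -> lowa k0 x.

Definition atomb bs := size bs = size cl /\ consistent (conjb cl bs).
Definition held bs g := LCA (Imp (conjb cl bs) g).

Lemma held_mp bs f g : held bs f -> LCA (Imp f g) -> held bs g.
Proof. move=> H1 H2; refine (pc2 H1 H2 _) => v; bt. Qed.
Lemma held_mp2 bs f1 f2 g : held bs f1 -> held bs f2 -> LCA (Imp f1 (Imp f2 g)) -> held bs g.
Proof. move=> H1 H2 H3; refine (pc3 H1 H2 H3 _) => v; bt. Qed.
Lemma held_thm bs g : LCA g -> held bs g.
Proof. move=> H; refine (pc1 H _) => v; bt. Qed.
Lemma held_and bs a b : held bs (And a b) <-> held bs a /\ held bs b.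
Proof. split => [H|[H1 H2]].
- split; refine (pc1 H _) => v; bt.
- refine (pc2 H1 H2 _) => v; bt. Qed.
Lemma held_bigAnd bs L : (forall f, In f L -> held bs f) -> held bs (bigAnd L).
Proof. elim: L => [|a L IH] H /=.
- by apply: held_thm; apply: taut => v; rewrite pe_top.
- apply/held_and; split; [apply: H; left | apply: IH => f Hf; apply: H; right] => //. Qed.
Lemma atom_cons bs g : atomb bs -> held bs g -> held bs (Neg g) -> False.
Proof. move=> [_ Hc] H1 H2; apply: Hc; refine (pc2 H1 H2 _) => v; bt. Qed.
Lemma held_cl bs g : atomb bs -> In g cl -> held bs g \/ held bs (Neg g).
Proof. move=> [Hs _] Hin; case: (conj_lit Hs Hin) => H; [left|right]; apply: taut => v /=;
  move: (H v); case: (peval v (conjb cl bs)); case: (peval v g) => //= K; by have := K isT. Qed.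
Lemma held_neg bs g : atomb bs -> In g cl -> (held bs (Neg g) <-> ~ held bs g).
Proof. move=> Ha Hin; split => [H1 H2|H]; first exact: atom_cons Ha H2 H1.
by case: (held_cl Ha Hin). Qed.

Lemma lind f : consistent f -> exists bs, atomb bs /\ consistent (And (conjb cl bs) f).
Proof. move=> /(lind_gen cl) [bs [Hs Hc]]; exists bs; split => //; split => // H.
apply: Hc; refine (pc1 H _) => v; bt. Qed.
Lemma lind_pos bs f g : atomb bs -> consistent (And (conjb cl bs) f) -> In g cl ->
  LCA (Imp f g) -> held bs g.
Proof. move=> Ha Hc Hin H; case: (held_cl Ha Hin) => // H2; case: Hc.
refine (pc2 H H2 _) => v; bt. Qed.
Lemma lind_neg bs f g : atomb bs -> consistent (And (conjb cl bs) f) -> In g cl ->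
  LCA (Imp f (Neg g)) -> ~ held bs g.
Proof. move=> Ha Hc Hin H H2; case: Hc. refine (pc2 H H2 _) => v; bt. Qed.

Lemma held_window bs o i L g : (forall c, In c L -> held bs (Mod o i c)) ->
  LCA (Imp g (bigOr L)) -> held bs (Mod o i g).
Proof. move=> H Hg.
have H1 : held bs (bigAnd (map (Mod o i) L)).
  apply: held_bigAnd => f Hf; case: (in_map_In Hf) => c [-> Hc]; exact: H.
apply: held_mp (held_mp H1 (mod_bigOr o i L)) _; exact: mod_anti.
Qed.


Definition T0 : form0 n := Neg0 (And0 (At0 (AP n 0)) (Neg0 (At0 (AP n 0)))).
Definition Or0 (a b : form0 n) := Neg0 (And0 (Neg0 a) (Neg0 b)).
Fixpoint expr (P : seq bool -> Prop) (len k : nat) : form0 n :=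
  match len with
  | 0 => if excluded_middle_informative (P [::]) then T0 else Neg0 T0
  | len'.+1 => Or0 (And0 (At0 (AP n k)) (expr (fun bl => P (true :: bl)) len' k.+1))
                   (And0 (Neg0 (At0 (AP n k))) (expr (fun bl => P (false :: bl)) len' k.+1))
  end.

Lemma expr_sat S P len k bl : size bl = len ->
  (forall j, j < len -> (Val S (AP n (k + j)) <-> nth false bl j)) ->
  (sat0 S (expr P len k) <-> P bl).
Proof.
elim: len P k bl => [|len IH] P k [|b bl] //= Hs Hb.
- case: excluded_middle_informative => HP /=; split => //; tauto.
- case: Hs => Hs.
  have Hv : Val S (AP n k) <-> b by move: (Hb 0 isT); rewrite addn0.
  have Hr : forall P', sat0 S (expr P' len k.+1) <-> P' bl.
    move=> P'; apply: IH => // j Hj; move: (Hb j.+1 Hj); by rewrite addSnnS.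
  rewrite Hr Hr; case: b Hv Hb => Hv Hb.
  + have V : Val S (AP n k) by apply/Hv. tauto.
  + have V : ~ Val S (AP n k) by move/Hv. tauto.
Qed.

Local Notation m := (size cl).

Definition Bsub bs i bs' :=
  (forall c, In (Box i c) cl -> held bs (Box i c) -> held bs' c) /\
  (forall a, In (Tri i a) cl -> held bs (Tri i a) -> held bs' (emb a)).
Definition NK k bs i bs' (d : bool) :=
  (exists c, In (Mod (base k) i c) cl /\ held bs (Mod (base k) i c) /\ held bs' c) \/
  (d = true /\ Bsub bs i bs' /\
     exists c, In (Mod (real k) i c) cl /\ held bs (Mod (real k) i c) /\ held bs' c).
Definition thetaE bs i := expr (fun bl => nth false bl m = true /\ Bsub bs i (take m bl)) m.+1 k0.
Definition thetaK k bs i := expr (fun bl => NK k bs i (take m bl) (nth false bl m)) m.+1 k0.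

Definition stVal bs (d : bool) (x : atom n) : Prop :=
  match x with
  | AP j => if k0 <= j then nth false (rcons bs d) (j - k0) = true else held bs (At x)
  | _ => held bs (At x) end.
Definition stBel bs (i : agent n) (a : form0 n) : Prop :=
  (In (Tri i a) cl /\ held bs (Tri i a)) \/ a = thetaE bs i \/
  a = Imp0 (thetaK KA bs i) (At0 (tg KA i)) \/ a = Imp0 (thetaK KR bs i) (At0 (tg KR i)).
Definition st bs d : state n := State (stBel bs) (stVal bs d).
Definition Um (S : state n) : Prop := exists bs d, atomb bs /\ S = st bs d.

Lemma expr_st P bs d : size bs = m ->
  (sat0 (st bs d) (expr P m.+1 k0) <-> P (rcons bs d)).
Proof. move=> Hs; apply: expr_sat; first by rewrite size_rcons Hs.
move=> j Hj /=; by rewrite leq_addr addKn. Qed.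

Lemma thetaE_sat bs i bs' d : size bs' = m ->
  (sat0 (st bs' d) (thetaE bs i) <-> d = true /\ Bsub bs i bs').
Proof. move=> Hs; rewrite /thetaE expr_st // nth_rcons Hs ltnn eqxx -cats1 take_size_cat //. Qed.
Lemma thetaK_sat k bs i bs' d : size bs' = m ->
  (sat0 (st bs' d) (thetaK k bs i) <-> NK k bs i bs' d).
Proof. move=> Hs; rewrite /thetaK expr_st // nth_rcons Hs ltnn eqxx -cats1 take_size_cat //. Qed.

Lemma low_expr P len : ~ low0 k0 (expr P len.+1 k0).
Proof. by rewrite /= ltnn => [[[]]]. Qed.

Lemma truth0 a bs d : atomb bs -> In (emb a) cl -> (sat0 (st bs d) a <-> held bs (emb a)).
Proof.
move=> Ha; elim: a => [x|b IH|b IHb c IHc|i b _] /= Hin.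
- move: (Hat Hin); case: x Hin => [j|j|j] Hin //= Hl.
  by rewrite leqNgt Hl.
- have Hb := Hneg Hin; rewrite (held_neg Ha Hb) IH //.
- case: (Hand Hin) => H1 H2; rewrite held_and IHb // IHc //.
- rewrite /stBel; case: (Htri Hin) => _ Hl; split; last by move=> H; left.
  case=> [[_ ?]//|[E|[E|E]]]; exfalso; move: Hl; rewrite E.
  + exact: low_expr.
  + move=> H; have : low0 k0 (thetaK KA bs i) := proj1 H. exact: low_expr.
  + move=> H; have : low0 k0 (thetaK KR bs i) := proj1 H. exact: low_expr.
Qed.


Lemma constr k i bs bs' : atomb bs -> atomb bs' -> Bsub bs i bs' -> NK k bs i bs' true ->
  held bs' (At (tg k i)).
Proof.
move=> Ha Ha' [Hb1 Hb2] HN.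
have Key : forall c, In (Mod (base k) i c) cl \/ In (Mod (real k) i c) cl ->
    held bs (Mod (real k) i c) -> held bs' c -> held bs' (At (tg k i)).
  move=> c Hin Hr Hc.
  have Hbx : In (Box i (Imp c (At (tg k i)))) cl.
    case: Hin => /Hmod [_]; by rewrite ?tgo_base ?tgo_real.
  have := Hb1 _ Hbx (held_mp Hr (axA10 k i c)) => Hi.
  apply: held_mp2 Hc Hi _; apply: taut => v; bt.
case: HN => [[c [Hin [Hh Hc]]]|[_ [_ [c [Hin [Hh Hc]]]]]].
- apply: (Key c) => //; [by left | exact: held_mp Hh (axA6 k i c)].
- apply: (Key c) => //; by right.
Qed.

Lemma relE_char i bs d bs' d' : atomb bs -> atomb bs' ->
  (relE i (st bs d) (st bs' d') <-> d' = true /\ Bsub bs i bs').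
Proof.
move=> Ha Ha'; have Hs' : size bs' = m by case: Ha'.
split.
- move=> H; apply/(thetaE_sat bs i d' Hs'); apply: H; by right; left.
- move=> [Hd Hsub] a [[Hin Hh]|[->|[->|->]]].
  + case: (Htri Hin) => He _; apply/(truth0 d' Ha' He); by apply: (proj2 Hsub).
  + by apply/thetaE_sat.
  + move=> /= [/(thetaK_sat KA bs i d' Hs') HN HnR]; apply: HnR.
    rewrite Hd in HN; exact: (constr Ha Ha' Hsub HN).
  + move=> /= [/(thetaK_sat KR bs i d' Hs') HN HnR]; apply: HnR.
    rewrite Hd in HN; exact: (constr Ha Ha' Hsub HN).
Qed.

Lemma relK_char k i bs d bs' d' : atomb bs -> atomb bs' ->
  (relK k i (st bs d) (st bs' d') <-> NK k bs i bs' d').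
Proof.
move=> Ha Ha'; have Hs' : size bs' = m by case: Ha'.
rewrite relK_def; split.
- move=> [a [HB Hsat]]; case: HB => [[Hin Hh]|[E|[E|E]]].
  + left; exists (emb a); split; first exact: HtriK.
    split; first exact: held_mp Hh (axA4 k i a).
    case: (Htri Hin) => He _.
    have Hea : In (emb a) cl.
      move: He => /= /Hneg /Hand [] //.
    by apply/(truth0 d' Ha' Hea).
  + exfalso; move: E; rewrite /thetaE /= /Imp0 /Or0; congruence.
  + case: k E Hsat => E; last by (exfalso; move: E; rewrite /Imp0 /=; congruence).
    move: E; rewrite /Imp0 => [[->]] /(thetaK_sat _ _ _ _ Hs') //.
  + case: k E Hsat => E; first by (exfalso; move: E; rewrite /Imp0 /=; congruence).
    move: E; rewrite /Imp0 => [[->]] /(thetaK_sat _ _ _ _ Hs') //.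
- move=> HN; exists (thetaK k bs i); split; last by apply/thetaK_sat.
  right; right; case: k HN => HN; [left|right] => //.
Qed.


Lemma Bexists bs i : exists B, forall f, In f B <->
  exists h, In h cl /\ (held bs h /\ (h = Box i f \/ exists a, h = Tri i a /\ f = emb a)).
Proof.
apply: fin_sel => h f f' [_ [E1|[a [E1 E2]]]] [_ [E3|[a' [E3 E4]]]]; congruence.
Qed.

Lemma Mexists bs o i : exists L, forall f, In f L <->
  exists h, In h cl /\ (held bs h /\ h = Mod o i f).
Proof. apply: fin_sel => h f f' [_ E1] [_ E]; congruence. Qed.

Lemma B_box bs i B : (forall f, In f B <->
  exists h, In h cl /\ (held bs h /\ (h = Box i f \/ exists a, h = Tri i a /\ f = emb a))) ->
  held bs (Box i (bigAnd B)).
Proof.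
move=> HB; apply: held_mp (box_bigAnd i B).
apply: held_bigAnd => f Hf; case: (in_map_In Hf) => c [-> Hc].
case/HB: Hc => h [_ [Hh [E|[a [E1 E2]]]]]; first by rewrite -E.
rewrite E2; rewrite E1 in Hh; exact: held_mp Hh (LCA_A3 i a).
Qed.

Lemma B_sub bs i B f bs' : atomb bs' -> (forall f, In f B <->
  exists h, In h cl /\ (held bs h /\ (h = Box i f \/ exists a, h = Tri i a /\ f = emb a))) ->
  consistent (And (conjb cl bs') f) ->
  (forall v, peval v f -> all (peval v) B) -> Bsub bs i bs'.
Proof.
move=> Ha' HB Hc Hf; split.
- move=> c Hin Hh; apply: (lind_pos Ha' Hc); first exact: Hbox Hin.
  apply: taut => v /=; move: (Hf v); case: (peval v f) => //= /(_ isT) Hall.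
  have -> // : peval v c by apply: (all_In _ Hall); apply/HB; exists (Box i c); split => //; split => //; left.
- move=> a Hin Hh; apply: (lind_pos Ha' Hc); first by case: (Htri Hin).
  apply: taut => v /=; move: (Hf v); case: (peval v f) => //= /(_ isT) Hall.
  have -> // : peval v (emb a) by apply: (all_In _ Hall); apply/HB; exists (Tri i a); split => //; split => //; right; exists a.
Qed.

Lemma truth g : forall bs d, atomb bs -> In g cl -> (sat Um (st bs d) g <-> held bs g).
Proof.
have Hsz : forall bs, atomb bs -> size bs = m by move=> bs [].
elim: g => [x|g IH|g IHg h IHh|i a|i g IH|o i g IH] bs d Ha Hin.
- exact: (truth0 (a := At0 x) d Ha Hin).
- have Hg := Hneg Hin; rewrite (held_neg Ha Hg) /=; by rewrite IH.
- case: (Hand Hin) => H1 H2; rewrite held_and /= IHg // IHh //.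
- exact: (truth0 (a := Tri0 i a) d Ha Hin).
- have Hg := Hbox Hin; split.
  + move=> Hs; apply: NNPP => Hn.
    case: (Bexists bs i) => B HB.
    have Hc : consistent (And (bigAnd B) (Neg g)).
      move=> H; apply: Hn; apply: held_mp (B_box HB) _; exact: box_mono.
    case: (lind Hc) => bs' [Ha' Hc'].
    have Hsub : Bsub bs i bs'.
      apply: (B_sub Ha' HB Hc') => v /=; rewrite pe_bigAnd; by case: (all _ _).
    have Hng : ~ held bs' g.
      apply: (lind_neg Ha' Hc' Hg); apply: taut => v; bt.
    apply: Hng; apply/(IH bs' true Ha' Hg); apply: Hs; first by exists bs', true.
    by apply/relE_char.
  + move=> Hh S' [bs' [d' [Ha' ->]]] /(relE_char _ _ _ Ha Ha') [_ [Hs1 _]].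
    apply/IH => //; exact: Hs1.
- have [Hg _] := Hmod Hin.
  have Hall : forall k, (o = base k \/ o = real k) -> 
     (sat Um (st bs d) (Mod o i g) <-> held bs (Mod o i g)).
    move=> k [E|E]; subst o.
    + rewrite sat_base; split.
      * move=> Hs; apply: NNPP => Hn.
        case: (Mexists bs (base k) i) => L1 HL1.
        have Hc : consistent (And g (bigAnd (map (@Neg n) L1))).
          move=> H; apply: Hn; apply: (held_window (L := L1)).
          - move=> c /HL1 [h [_ [Hh E]]]; by rewrite -E.
          - refine (pc1 H _) => v /=; rewrite pe_bigAndNeg pe_bigOr; by case: (peval v g); case: (has _ _).
        case: (lind Hc) => bs' [Ha' Hc'].
        have Hg' : held bs' g.
          apply: (lind_pos Ha' Hc' Hg); apply: taut => v; bt.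
        have := Hs (st bs' false) (ex_intro _ bs' (ex_intro _ false (conj Ha' erefl))).
        move=> /(_ (proj2 (IH bs' false Ha' Hg) Hg')) /(relK_char _ _ _ _ Ha Ha').
        case=> [[c [Hinc [Hhc Hc2]]]|[]//].
        have HcL : In c L1 by apply/HL1; exists (Mod (base k) i c).
        apply: (lind_neg Ha' Hc' (proj1 (Hmod Hinc)) _ Hc2).
        apply: taut => v /=; rewrite pe_bigAndNeg.
        case E: (peval v c); last by rewrite andbF. by rewrite (has_In HcL E) andbF.
      * move=> Hh S' [bs' [d' [Ha' ->]]] /(IH _ _ Ha' Hg) Hg'.
        apply/(relK_char _ _ _ _ Ha Ha'); left; exists g; split => //.
    + rewrite sat_real; split.
      * move=> Hs; apply: NNPP => Hn.
        case: (Mexists bs (base k) i) => L1 HL1.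
        case: (Mexists bs (real k) i) => L2 HL2.
        case: (Bexists bs i) => B HB.
        have Hc : consistent (And g (And (bigAnd B) (bigAnd (map (@Neg n) (L1 ++ L2))))).
          move=> H; apply: Hn; apply: (held_window (L := Neg (bigAnd B) :: L1 ++ L2)).
          - move=> c /= [<-|]; first exact: held_mp (B_box HB) (axA8 k i _).
            move/In_cat => [/HL1 [h [_ [Hh E]]]|/HL2 [h [_ [Hh E]]]]; rewrite E in Hh => //.
            exact: held_mp Hh (axA6 k i c).
          - refine (pc1 H _) => v /=; rewrite pe_bigAndNeg pe_bigOr.
            by case: (peval v g); case: (peval v (bigAnd B)); case: (has _ _).
        case: (lind Hc) => bs' [Ha' Hc'].
        have Hg' : held bs' g.
          apply: (lind_pos Ha' Hc' Hg); apply: taut => v; bt.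
        have Hsub : Bsub bs i bs'.
          apply: (B_sub Ha' HB Hc') => v /=; rewrite pe_bigAnd; by case: (all _ _); rewrite ?andbF.
        have := Hs (st bs' true) (ex_intro _ bs' (ex_intro _ true (conj Ha' erefl))).
        move=> /(_ (proj2 (IH bs' true Ha' Hg) Hg')).
        move=> /(_ (proj2 (relE_char _ _ _ Ha Ha') (conj erefl Hsub))) /(relK_char _ _ _ _ Ha Ha').
        have Hnot : forall c, In c (L1 ++ L2) -> In c cl -> ~ held bs' c.
          move=> c HcL Hcc; apply: (lind_neg Ha' Hc' Hcc).
          apply: taut => v /=; rewrite pe_bigAndNeg.
          case E: (peval v c); last by rewrite andbF. rewrite (has_In HcL E); by case: (peval v g); case: (peval v (bigAnd B)).
        case=> [[c [Hinc [Hhc Hc2]]]|[_ [_ [c [Hinc [Hhc Hc2]]]]]].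
        - apply: (Hnot c _ (proj1 (Hmod Hinc)) Hc2); apply/In_cat; left.
          apply/HL1; by exists (Mod (base k) i c).
        - apply: (Hnot c _ (proj1 (Hmod Hinc)) Hc2); apply/In_cat; right.
          apply/HL2; by exists (Mod (real k) i c).
      * move=> Hh S' [bs' [d' [Ha' ->]]] /(IH _ _ Ha' Hg) Hg' /(relE_char _ _ _ Ha Ha') [Hd Hsub].
        apply/(relK_char _ _ _ _ Ha Ha'); right; split => //; split => //; by exists g.
  case: o Hin Hall => Hin Hall.
  + exact: (Hall KA (or_introl erefl)).
  + exact: (Hall KR (or_introl erefl)).
  + exact: (Hall KA (or_intror erefl)).
  + exact: (Hall KR (or_intror erefl)).
Qed.


Lemma complete_model phi : In phi cl -> ~ LCA phi -> exists U S, U S /\ ~ sat U S phi.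
Proof.
move=> Hin Hn.
have Hc : consistent (Neg phi).
  move=> H; apply: Hn; refine (pc1 H _) => v; bt.
case: (lind Hc) => bs [Ha Hc'].
have Hnh : ~ held bs phi by apply: (lind_neg Ha Hc' Hin); apply: taut => v; bt.
exists Um, (st bs false); split; first by exists bs, false.
by move/(truth false Ha Hin).
Qed.

End Model.


Section Clos.
Variable n : nat.
Implicit Types (f g h : form n) (L : seq (form n)).
Local Notation In := List.In.
Definition incl L1 L2 := forall x, In x L1 -> In x L2.

Definition modx o (i : agent n) g : seq (form n) :=
  [:: Mod o i g; Box i (Imp g (At (tgo o i))); Imp g (At (tgo o i));
      And g (Neg (At (tgo o i))); Neg (At (tgo o i)); At (tgo o i)].

Definition destT (i : agent n) (b : form0 n) : option (mop * form0 n) :=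
  match b with
  | Neg0 (And0 a (Neg0 (At0 x))) =>
      match x with
      | ARew j => if j == i then Some (OA, a) else None
      | APun j => if j == i then Some (OR, a) else None
      | _ => None end
  | _ => None end.

Lemma destT_spec i b o a : destT i b = Some (o, a) -> b = Imp0 a (At0 (tgo o i)).
Proof.
case: b => // [[]] // a' [] // [] // [] // j /=; case: eqP => // -> [<- <-] //.
Qed.
Lemma destT_K k i a : destT i (Imp0 a (At0 (tg k i))) = Some (base k, a).
Proof. by case: k; rewrite /= eqxx. Qed.

Definition trix i b : seq (form n) :=
  match destT i b with Some (o, a) => modx o i (emb a) | None => [::] end.

Fixpoint cl0 (a : form0 n) : seq (form n) :=
  match a with
  | At0 x => [:: At x]
  | Neg0 b => emb a :: cl0 b
  | And0 b c => emb a :: cl0 b ++ cl0 c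
  | Tri0 i b => Tri i b :: cl0 b ++ trix i b
  end.
Fixpoint clf f : seq (form n) :=
  match f with
  | At x => [:: f]
  | Neg g => f :: clf g
  | And g h => f :: clf g ++ clf h
  | Tri i b => cl0 (Tri0 i b)
  | Box i g => f :: clf g
  | Mod o i g => modx o i g ++ clf g
  end.

Lemma clf_emb a : clf (emb a) = cl0 a.
Proof. elim: a => //= [b -> | b -> c ->] //. Qed.

Lemma self f : In f (clf f).
Proof. case: f => /= *; by left. Qed.

Ltac inc := let x := fresh "x" in let Hx := fresh "Hx" in
  move=> x Hx; rewrite /= ?In_cat /= in Hx *; rewrite ?In_cat /=; rewrite /Imp in Hx *; tauto.

Lemma modx_closed o i g h : In h (modx o i g) -> incl (clf h) (modx o i g ++ clf g).
Proof.
rewrite /modx /=; case=> [<-|[<-|[<-|[<-|[<-|[<-|[]]]]]]]; try inc.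
Qed.

Lemma sub_trans0 a h : In h (cl0 a) -> incl (clf h) (cl0 a).
Proof.
elim: a h => [x|b IH|b IHb c IHc|i b IH] h /=.
- case=> [<-|[]]; inc.
- case=> [<-|/IH H]; first by move=> x /=; rewrite !clf_emb.
  move=> x /H; by right.
- case=> [<-|/In_cat [/IHb H|/IHc H]]; first by move=> x /=; rewrite !clf_emb.
  + move=> x /H Hx; right; apply/In_cat; by left.
  + move=> x /H Hx; right; apply/In_cat; by right.
- case=> [<-|/In_cat [/IH H|Ht]]; first by move=> x.
  + move=> x /H Hx; right; apply/In_cat; by left.
  + move: Ht; rewrite /trix; case E: (destT i b) => [[o a]|] // Hm.
    move: (destT_spec E) => Eb.
    have Hsub : incl (cl0 a) (cl0 b).
      rewrite Eb /= => x Hx; right; right; apply/In_cat; by left.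
    move=> x /(modx_closed Hm) /In_cat [Hx|Hx].
    * right; apply/In_cat; right => //.
    * right; apply/In_cat; left; apply: Hsub; by rewrite -clf_emb.
Qed.

Lemma sub_trans f h : In h (clf f) -> incl (clf h) (clf f).
Proof.
elim: f h => [x|g IH|g IHg k IHk|i b|i g IH|o i g IH] h; try rewrite [clf (Mod _ _ _)]/=.
- case=> [<-|[]]; inc.
- case=> [<-|/IH H]; first by move=> x.
  move=> x /H; by right.
- case=> [<-|/In_cat [/IHg H|/IHk H]]; first by move=> x.
  + move=> x /H Hx; right; apply/In_cat; by left.
  + move=> x /H Hx; right; apply/In_cat; by right.
- exact: (sub_trans0 (a := Tri0 i b)).
- case=> [<-|/IH H]; first by move=> x.
  move=> x /H; by right.
- change (In h (modx o i g ++ clf g) -> incl (clf h) (modx o i g ++ clf g)).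
  move/In_cat => [Hm|/IH H]; first exact: modx_closed.
  move=> x /H Hx; apply/In_cat; by right.
Qed.

End Clos.

Section Final.
Variable n : nat.
Implicit Types (f g h : form n).
Local Notation In := List.In.

Fixpoint lowf k f : Prop :=
  match f with At x => lowa k x | Neg g => lowf k g | And a b => lowf k a /\ lowf k b
  | Tri _ a => low0 k a | Box _ g => lowf k g | Mod _ _ g => lowf k g end.

Lemma lowf_emb k a : lowf k (emb a) <-> low0 k a.
Proof. elim: a => //= [b IHb c IHc]; by rewrite IHb IHc. Qed.

Lemma lowa_tgo k o (i : agent n) : lowa k (tgo o i).
Proof. by case: o. Qed.

Lemma low_cl0 k a : low0 k a -> forall h, In h (cl0 a) -> lowf k h.
Proof.
elim: a => [x|b IH|b IHb c IHc|i b IH] /= Hl h.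
- by case=> [<-|[]].
- case=> [<-|]; [exact/lowf_emb | exact: IH].
- case: Hl => H1 H2; case=> [<-|/In_cat [|]]; [by apply/(lowf_emb k (And0 b c)) | exact: IHb | exact: IHc].
- case=> [<-|/In_cat [|]] //; first exact: IH.
  rewrite /trix; case E: (destT i b) => [[o a]|] //.
  move: (destT_spec E) Hl => -> /= [Ha _].
  have Hla := proj2 (lowf_emb k a) Ha.
  rewrite /modx /=; case=> [<-|[<-|[<-|[<-|[<-|[<-|[]]]]]]] /=; have Ht := lowa_tgo k o i; tauto.
Qed.

Lemma low_cl k f : lowf k f -> forall h, In h (clf f) -> lowf k h.
Proof.
elim: f => [x|g IH|g IHg g' IHg'|i b|i g IH|o i g IH] /= Hl h.
- by case=> [<-|[]].
- case=> [<-|]; [done | exact: IH].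
- case: Hl => H1 H2; case=> [<-|/In_cat [|]]; [done | exact: IHg | exact: IHg'].
- exact: (low_cl0 (a := Tri0 i b)).
- case=> [<-|]; [done | exact: IH].
- have Ht := lowa_tgo k o i.
  case=> [<-|[<-|[<-|[<-|[<-|[<-|]]]]]] /=; try tauto. exact: IH.
Qed.

Fixpoint mx0 (a : form0 n) : nat :=
  match a with At0 x => (if x is AP j then j else 0) | Neg0 b => mx0 b
  | And0 b c => maxn (mx0 b) (mx0 c) | Tri0 _ b => mx0 b end.
Fixpoint mxf f : nat :=
  match f with At x => (if x is AP j then j else 0) | Neg g => mxf g | And a b => maxn (mxf a) (mxf b)
  | Tri _ a => mx0 a | Box _ g => mxf g | Mod _ _ g => mxf g end.
Lemma mx0_low a k : mx0 a < k -> low0 k a.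
Proof. elim: a => [[]|b IH|b IHb c IHc|i b IH] //=; rewrite ?gtn_max; try (case/andP; split); auto. Qed.
Lemma mxf_low f k : mxf f < k -> lowf k f.
Proof. elim: f => [[]|g IH|g IHg h IHh|i b|i g IH|o i g IH] //=; rewrite ?gtn_max; try (case/andP; split); auto.
exact: mx0_low. Qed.

Lemma completeness (phi : form n) : valid phi -> LCA phi.
Proof.
move=> Hv; apply: NNPP => Hn.
pose k0 := (mxf phi).+1.
have Hlow := low_cl (mxf_low (leqnn k0)).
have Hsub := @sub_trans n phi.
have [U [S [HS Hns]]] : exists U S, U S /\ ~ sat U S phi.
refine (@complete_model n (clf phi) k0 _ _ _ _ _ _ _ phi _ _).
- move=> g /Hsub H; apply: H; right; exact: self.
- move=> a b /Hsub H; split; apply: H; right; apply/In_cat; [left|right]; exact: self.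
- move=> i g /Hsub H; apply: H; right; exact: self.
- move=> o i g /Hsub H; split; apply: H; apply/In_cat; [right; exact: self| by left; right; left].
- move=> i a Hin; split; last exact: (Hlow _ Hin).
  apply: (Hsub _ Hin); right; apply/In_cat; left; rewrite -clf_emb; exact: self.
- move=> k i a /Hsub H; apply: H; right; apply/In_cat; right; rewrite /trix destT_K; by left.
- move=> x Hin; exact: (Hlow _ Hin).
- exact: self.
- exact: Hn.
apply: Hns; exact: Hv.
Qed.

Theorem main (phi : form n) : LCA phi <-> valid phi.
Proof. split; [exact: soundness | exact: completeness]. Qed.
End Final.


Unset Implicit Arguments.
Theorem theorem2 (n : nat) (phi : form n) : LCA phi <-> valid phi.
Proof. exact: main. Qed.
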